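(* For $q>0$, $$\tilde\psi(q)=-\frac1q+\tilde\gamma_0+\sum_{k=1}^\infty(-1)^k\left(\frac1k-\frac1{k+q}\right),$$ and the function $$\tilde\Gamma(q)=\frac1q\, e^{\tilde\gamma_0 q}\prod_{k=1}^\infty\left(e^{-\frac qk}\left(1+\frac qk\right)\right)^{(-1)^{k+1}}\qquad(q>0)$$ satisfies the differential equation $\tilde\psi(q)=\frac{d}{dq}\log\tilde\Gamma(q)$.
   Context: For $q>0$, $\zeta_E(z,q)=\sum_{n=0}^\infty (-1)^n (n+q)^{-z}$ for $\mathrm{Re}(z)>0$, extended by analytic continuation to an entire function of $z$. The modified Stieltjes constants $\tilde\gamma_k(q)$ are defined by the Taylor expansion $\zeta_E(z,q)=\sum_{k=0}^\infty\frac{(-1)^k\tilde\gamma_k(q)}{k!}(z-1)^k$; $\tilde\gamma_0:=\tilde\gamma_0(1)=\zeta_E(1,1)$ (the modified Euler constant). The modified digamma function is $\tilde\psi(q):=-\tilde\gamma_0(q)=-\zeta_E(1,q)=-\sum_{n\ge0}\frac{(-1)^n}{n+q}$. The modified gamma function $\tilde\Gamma$ is defined (up to the normalization given by the product) by the differential equation $\frac{d}{dq}\log\tilde\Gamma(q)=\tilde\psi(q)$. *)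

(* Defs.v *)
From Stdlib Require Import Reals Lra.
From Coquelicot Require Import Coquelicot.
Open Scope R_scope.

(* zeta_E(1,q) = sum_{n>=0} (-1)^n/(n+q)   (value of the Taylor/Dirichlet series at z=1,
   where the defining series converges since Re z = 1 > 0). *)
Definition zetaE1 (q : R) : R := Series (fun n : nat => (-1) ^ n / (INR n + q)).

Definition gamma0t : R := zetaE1 1.

Definition psit (q : R) : R := - zetaE1 q.

(* k-th factor (k >= 1) of the product: (e^{-q/k}(1+q/k))^{(-1)^{k+1}} *)
Definition gfactor (q : R) (k : nat) : R :=
  powerRZ (exp (- q / INR k) * (1 + q / INR k)) (if Nat.even k then (-1)%Z else 1%Z).

Fixpoint gprod (q : R) (N : nat) : R :=
  match N with
  | O => 1
  | S n => gprod q n * gfactor q (S n)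
  end.

Definition Gammat (q : R) : R := / q * exp (gamma0t * q) * Lim_seq (gprod q).

(* Main.v *)
Require Import Defs.
From Stdlib Require Import Reals Lra Lia ZArith.
From Coquelicot Require Import Coquelicot.
Open Scope R_scope.

Definition cc (j : nat) : R := / INR (S j) - / INR (S (S j)).

Lemma INR_S_pos j : 0 < INR (S j).
Proof. apply lt_0_INR; lia. Qed.

Lemma cc_pos j : 0 < cc j.
Proof.
  unfold cc. rewrite (S_INR (S j)). pose proof (INR_S_pos j).
  apply Rlt_Rminus. apply Rinv_lt_contravar; nra.
Qed.

Lemma sq_le_cc j : / (INR (S j) * INR (S j)) <= 2 * cc j.
Proof.
  unfold cc. rewrite (S_INR (S j)). pose proof (INR_S_pos j).
  set (a := INR (S j)) in *.
  replace (/ a - / (a + 1)) with (/ (a * (a+1))) by (field; lra).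
  rewrite <- (Rmult_1_l (/ (a*(a+1)))).
  replace (2 * (1 * / (a * (a + 1)))) with (/ (a * (a + 1) / 2)) by (field; lra).
  apply Rinv_le_contravar. nra.
  assert (1 <= a). { unfold a. rewrite S_INR. pose proof (pos_INR j). lra. }
  nra.
Qed.

Lemma cc_sum n : sum_f_R0 cc n = 1 - / INR (S (S n)).
Proof.
  induction n as [|n IH].
  - simpl. unfold cc. simpl. lra.
  - rewrite tech5, IH. unfold cc. lra.
Qed.

Lemma tail_bound (a : nat -> R) (s M : R) :
  0 <= M -> infinite_sum a s -> (forall j, Rabs (a j) <= M * cc j) ->
  forall n, Rabs (s - sum_f_R0 a n) <= M * / INR (S (S n)).
Proof.
  intros HM Hs Ha n.
  assert (Hp : forall p, Rabs (sum_f_R0 a (p + n) - sum_f_R0 a n) <= M * (/ INR (S (S n)) - / INR (S (S (p + n))))).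
  { induction p as [|p IH].
    - simpl. rewrite Rminus_diag, Rabs_R0. lra.
    - replace (S p + n)%nat with (S (p + n)) by lia. rewrite tech5.
      eapply Rle_trans. 
      replace (sum_f_R0 a (p + n) + a (S (p + n)) - sum_f_R0 a n) with
        ((sum_f_R0 a (p + n) - sum_f_R0 a n) + a (S (p + n))) by ring.
      apply Rabs_triang.
      pose proof (Ha (S (p + n))). unfold cc in *. lra. }
  assert (Hl : is_lim_seq (fun p => Rabs (sum_f_R0 a (p + n) - sum_f_R0 a n)) (Rabs (s - sum_f_R0 a n))).
  { apply (is_lim_seq_abs _ (Finite (s - sum_f_R0 a n))).
    apply is_lim_seq_minus'. 
    - apply (is_lim_seq_incr_n (fun p => sum_f_R0 a p) n s). apply is_lim_seq_Reals. exact Hs.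
    - apply is_lim_seq_const. }
  assert (H := is_lim_seq_le _ _ _ _ (fun p => Rle_trans _ _ (M * / INR (S (S n))) (Hp p) ltac:(
     pose proof (INR_S_pos (S (p+n))); pose proof (Rinv_0_lt_compat _ H); nra)) Hl (is_lim_seq_const _)).
  exact H.
Qed.

Lemma cc_series : infinite_sum cc 1.
Proof.
  intros eps He. destruct (archimed (/ eps)) as [H1 _].
  assert (0 <= IZR (up (/ eps))) by (pose proof (Rinv_0_lt_compat _ He); lra).
  exists (Z.to_nat (up (/ eps))). intros n Hn.
  rewrite cc_sum. unfold Rdist.
  replace (1 - / INR (S (S n)) - 1) with (- / INR (S (S n))) by ring.
  rewrite Rabs_Ropp. pose proof (INR_S_pos (S n)).
  rewrite Rabs_pos_eq by (left; apply Rinv_0_lt_compat; lra).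
  assert (IZR (up (/eps)) <= INR n).
  { rewrite <- (Z2Nat.id (up (/eps))). rewrite <- INR_IZR_INZ. apply le_INR. lia.
    apply le_IZR. lra. }
  assert (Hi : / eps < INR (S n) + 1) by (rewrite S_INR; pose proof (pos_INR n); lra).
  pose proof (Rinv_0_lt_compat _ He).
  rewrite <- (Rinv_inv eps). apply Rinv_lt_contravar. apply Rmult_lt_0_compat; lra.
  rewrite (S_INR (S n)). exact Hi.
Qed.

Lemma ex_sum_cmp a M : (forall j, Rabs (a j) <= M * cc j) -> infinite_sum a (Series a).
Proof.
  intros H. apply is_series_Reals. apply Series_correct.
  apply (ex_series_le a (fun j => M * cc j)). intros n; apply H.
  exists (scal M 1). apply (is_series_scal_l M cc 1). apply is_series_Reals, cc_series.
Qed.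

Lemma zeta_series q : 0 < q -> is_series (fun n => (-1) ^ n / (INR n + q)) (zetaE1 q).
Proof.
  intros Hq.
  assert (Hd : Un_decreasing (fun n => / (INR n + q))).
  { intros n. rewrite S_INR. pose proof (pos_INR n). apply Rinv_le_contravar; nra. }
  assert (Hc : Un_cv (fun n => / (INR n + q)) 0).
  { apply is_lim_seq_Reals.
    assert (H : is_lim_seq (fun n => INR n + q) p_infty).
    { eapply is_lim_seq_plus. apply is_lim_seq_INR. apply is_lim_seq_const. reflexivity. }
    apply (is_lim_seq_inv _ _ H). discriminate. }
  destruct (alternated_series _ Hd Hc) as [l Hl].
  assert (Hs : is_series (fun n => (-1) ^ n / (INR n + q)) l).
  { apply is_series_Reals. exact Hl. }
  unfold zetaE1. rewrite (is_series_unique _ _ Hs). exact Hs.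
Qed.

Lemma part1 q : 0 < q ->
  is_series (fun j : nat => (-1) ^ (j + 1) * (1 / INR (j + 1) - 1 / (INR (j + 1) + q)))
              (psit q + 1 / q - gamma0t).
Proof.
  intros Hq.
  pose proof (zeta_series 1 Rlt_0_1) as HA.
  pose proof (zeta_series q Hq) as HB.
  assert (HB1' : is_series (fun k => (-1) * (-1) ^ k / (INR (S k) + q)) (zetaE1 q - 1 / q)).
  { apply (is_series_incr_1 (fun n => (-1) ^ n / (INR n + q))).
    match goal with |- is_series _ ?x => replace x with (zetaE1 q) end.
    exact HB. unfold plus; simpl. field. lra. }
  pose proof (is_series_plus _ _ _ _ (is_series_opp _ _ HA) (is_series_opp _ _ HB1')) as H.
  unfold gamma0t, psit.
  replace (- zetaE1 q + 1 / q - zetaE1 1) with (plus (opp (zetaE1 1)) (opp (zetaE1 q - 1 / q))).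
  2:{ unfold plus, opp; simpl. ring. }
  eapply is_series_ext. 2: exact H.
  intros n. unfold plus, opp; simpl. rewrite Nat.add_1_r, S_INR. simpl.
  replace (match n with 0%nat => 1 | S _ => INR n + 1 end) with (INR n + 1) by (destruct n; simpl; ring).
  pose proof (pos_INR n). field. lra.
Qed.

Definition bt (x : R) (j : nat) : R := (-1) ^ j * (ln (1 + x / INR (S j)) - x / INR (S j)).
Definition Gs (x : R) : R := Series (bt x).

Lemma ln_bound t : 0 <= t -> Rabs (ln (1 + t) - t) <= t * t.
Proof.
  intros Ht.
  assert (H1 : ln (1 + t) <= t).
  { rewrite <- (ln_exp t) at 2. apply ln_le. lra. apply exp_ineq1_le. }
  assert (H2 : t / (1 + t) <= ln (1 + t)).
  { pose proof (exp_ineq1_le (- (t / (1 + t)))) as H.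
    replace (1 + - (t / (1 + t))) with (/ (1 + t)) in H by (field; lra).
    rewrite exp_Ropp in H.
    assert (exp (t / (1+t)) <= 1 + t).
    { pose proof (exp_pos (t / (1+t))).
      apply Rinv_le_contravar in H. rewrite !Rinv_inv in H. exact H. apply Rinv_0_lt_compat; lra. }
    rewrite <- (ln_exp (t / (1+t))). apply ln_le. apply exp_pos. exact H0. }
  rewrite Rabs_left1 by lra.
  assert (t - t / (1 + t) <= t * t).
  { replace (t - t / (1 + t)) with (t * t / (1 + t)) by (field; lra).
    unfold Rdiv. rewrite <- (Rmult_1_r (t * t)) at 2.
    apply Rmult_le_compat_l. nra. rewrite <- Rinv_1. apply Rinv_le_contravar; lra. }
  lra.
Qed.

Lemma bt_bound x j : 0 <= x -> Rabs (bt x j) <= (2 * (x * x)) * cc j.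
Proof.
  intros Hx. unfold bt. rewrite Rabs_mult, pow_1_abs, Rmult_1_l.
  pose proof (INR_S_pos j).
  assert (Hb : 0 <= x / INR (S j)) by (unfold Rdiv; apply Rmult_le_pos; auto; left; apply Rinv_0_lt_compat; auto).
  eapply Rle_trans. apply (ln_bound _ Hb).
  replace (x / INR (S j) * (x / INR (S j))) with ((x * x) * / (INR (S j) * INR (S j))) by (field; lra).
  pose proof (sq_le_cc j).
  replace (2 * (x * x) * cc j) with ((x * x) * (2 * cc j)) by ring.
  apply Rmult_le_compat_l. nra. exact H0.
Qed.

Lemma pow_m1_even j : (-1) ^ j = if Nat.even j then 1 else -1.
Proof.
  induction j as [|j IH]. reflexivity.
  rewrite Nat.even_succ, <- Nat.negb_even. simpl. rewrite IH.
  destruct (Nat.even j); simpl; ring.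
Qed.

Lemma gfactor_exp x j : 0 < x -> gfactor x (S j) = exp (bt x j).
Proof.
  intros Hx. unfold gfactor, bt. pose proof (INR_S_pos j).
  assert (Hp : 0 < 1 + x / INR (S j)) by (unfold Rdiv; pose proof (Rinv_0_lt_compat _ H); nra).
  replace (exp (- x / INR (S j)) * (1 + x / INR (S j))) with (exp (ln (1 + x / INR (S j)) - x / INR (S j))).
  2:{ unfold Rminus. rewrite exp_plus, exp_ln by auto. unfold Rdiv. rewrite Ropp_mult_distr_l. ring. }
  rewrite pow_m1_even. rewrite Nat.even_succ, <- Nat.negb_even.
  destruct (Nat.even j); simpl.
  - rewrite Rmult_1_r, Rmult_1_l. reflexivity.
  - rewrite Rmult_1_r. rewrite <- exp_Ropp. f_equal. ring.
Qed.

Lemma gprod_exp x n : 0 < x -> gprod x (S n) = exp (sum_f_R0 (bt x) n).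
Proof.
  intros Hx. induction n as [|n IH].
  - simpl. rewrite Rmult_1_l. apply gfactor_exp; auto.
  - change (gprod x (S (S n))) with (gprod x (S n) * gfactor x (S (S n))).
    rewrite IH, gfactor_exp by auto. rewrite tech5, exp_plus. reflexivity.
Qed.

Lemma Gs_sum x : 0 <= x -> infinite_sum (bt x) (Gs x).
Proof. intros Hx. apply (ex_sum_cmp _ (2 * (x * x))). intros; apply bt_bound; auto. Qed.

Lemma gprod_lim x : 0 < x -> is_lim_seq (gprod x) (exp (Gs x)).
Proof.
  intros Hx. apply is_lim_seq_incr_1.
  apply (is_lim_seq_ext (fun n => exp (sum_f_R0 (bt x) n))).
  { intros n. symmetry. apply gprod_exp; auto. }
  apply (is_lim_seq_continuous exp). apply derivable_continuous_pt, derivable_pt_exp.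
  apply is_lim_seq_Reals. apply Gs_sum. lra.
Qed.

Lemma Gammat_eq x : 0 < x -> Gammat x = / x * exp (gamma0t * x) * exp (Gs x).
Proof.
  intros Hx. unfold Gammat. rewrite (is_lim_seq_unique _ _ (gprod_lim x Hx)). reflexivity.
Qed.

Lemma Gammat_pos x : 0 < x -> 0 < Gammat x.
Proof.
  intros Hx. rewrite Gammat_eq by auto.
  pose proof (Rinv_0_lt_compat _ Hx). pose proof (exp_pos (gamma0t * x)). pose proof (exp_pos (Gs x)).
  apply Rmult_lt_0_compat; auto. apply Rmult_lt_0_compat; auto.
Qed.

Lemma ln_Gammat x : 0 < x -> ln (Gammat x) = - ln x + gamma0t * x + Gs x.
Proof.
  intros Hx. rewrite Gammat_eq by auto.
  pose proof (Rinv_0_lt_compat _ Hx). pose proof (exp_pos (gamma0t * x)). pose proof (exp_pos (Gs x)).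
  rewrite !ln_mult, !ln_exp, ln_Rinv; auto. apply Rmult_lt_0_compat; auto.
Qed.

Definition dt (x : R) (j : nat) : R := (-1) ^ (j + 1) * (1 / INR (j + 1) - 1 / (INR (j + 1) + x)).

Lemma bt_derive x j : 0 < x -> is_derive (fun y => bt y j) x (dt x j).
Proof.
  intros Hx. unfold bt, dt. rewrite Nat.add_1_r. pose proof (INR_S_pos j).
  replace ((-1) ^ S j) with (- (-1) ^ j) by (simpl; ring).
  revert H. generalize (INR (S j)). intros a Ha.
  assert (Hp : 0 < 1 + x / a) by (unfold Rdiv; pose proof (Rinv_0_lt_compat _ Ha); nra).
  auto_derive.
  - exact Hp.
  - field. split. lra. 
    unfold Rdiv in Hp. intro E. 
    assert (E2 : a * (1 + x * / a) = 0) by (rewrite E; ring). 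
    replace (a * (1 + x * / a)) with (a + x) in E2 by (field; lra). lra.
Qed.

Lemma dt_bound y j : 0 < y -> Rabs (dt y j) <= (2 * y) * cc j.
Proof.
  intros Hy. unfold dt. rewrite Rabs_mult, pow_1_abs, Rmult_1_l.
  rewrite Nat.add_1_r. pose proof (INR_S_pos j). set (a := INR (S j)) in *.
  replace (1 / a - 1 / (a + y)) with (y * / (a * (a + y))) by (field; lra).
  rewrite Rabs_pos_eq.
  2:{ apply Rmult_le_pos. lra. left. apply Rinv_0_lt_compat. nra. }
  pose proof (sq_le_cc j). fold a in H0.
  replace (2 * y * cc j) with (y * (2 * cc j)) by ring.
  apply Rmult_le_compat_l. lra. eapply Rle_trans. 2: exact H0.
  apply Rinv_le_contravar; nra.
Qed.

Lemma small_tail K eps : 0 <= K -> 0 < eps -> exists N, forall n, (N <= n)%nat -> K * / INR (S (S n)) < eps.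
Proof.
  intros HK He. destruct (archimed (K / eps)) as [H1 _].
  assert (0 <= K / eps) by (unfold Rdiv; pose proof (Rinv_0_lt_compat _ He); nra).
  exists (Z.to_nat (up (K / eps))). intros n Hn.
  assert (IZR (up (K/eps)) <= INR n).
  { rewrite <- (Z2Nat.id (up (K/eps))). rewrite <- INR_IZR_INZ. apply le_INR. lia.
    apply le_IZR. lra. }
  pose proof (pos_INR n).
  assert (Hs : INR (S (S n)) = INR n + 2) by (rewrite !S_INR; ring).
  rewrite Hs. apply (Rmult_lt_reg_r (INR n + 2)). lra.
  rewrite Rmult_assoc, Rinv_l, Rmult_1_r by lra.
  assert (K < eps * (INR n + 2)).
  { assert (K / eps < INR n + 2) by lra.
    apply (Rmult_lt_compat_l eps) in H3; auto. unfold Rdiv in H3.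
    rewrite <- Rmult_assoc, (Rmult_comm eps K), Rmult_assoc, Rinv_r, Rmult_1_r in H3 by lra. exact H3. }
  lra.
Qed.

Lemma dt_sum y : 0 < y -> infinite_sum (dt y) (Series (dt y)).
Proof.
  intros Hy. apply is_series_Reals. pose proof (part1 y Hy) as H.
  unfold dt. rewrite (is_series_unique _ _ H). exact H.
Qed.

Lemma Gs_derive q : 0 < q -> derivable_pt_lim Gs q (Series (dt q)).
Proof.
  intros Hq.
  set (d := mkposreal (q / 2) ltac:(lra)).
  assert (Hball : forall y, Boule q d y -> q / 2 < y < 3 * q / 2).
  { intros y Hy. unfold Boule in Hy. simpl in Hy. apply Rabs_def2 in Hy. lra. }
  apply (CVU_derivable (fun n x => sum_f_R0 (bt x) n) (fun n x => sum_f_R0 (dt x) n) Gs (fun x => Series (dt x)) q d).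
  - intros eps He. destruct (small_tail (3 * q) eps ltac:(lra) He) as [N HN].
    exists N. intros n y Hn Hy. apply Hball in Hy.
    eapply Rle_lt_trans. apply (tail_bound (dt y) _ (3 * q)). lra. apply dt_sum; lra.
    intros j. eapply Rle_trans. apply dt_bound; lra. apply Rmult_le_compat_r. left; apply cc_pos. lra.
    apply HN; auto.
  - intros x Hx. apply Hball in Hx. apply Gs_sum. lra.
  - intros n x Hx. apply Hball in Hx. apply is_derive_Reals.
    induction n as [|n IH].
    + simpl. apply bt_derive. lra.
    + simpl. apply (is_derive_plus (fun x => sum_f_R0 (bt x) n) (fun x => bt x (S n))). exact IH. apply bt_derive. lra.
  - unfold Boule. simpl. rewrite Rminus_diag, Rabs_R0. lra.
Qed.

Theorem theorem3p12 :
  forall q : R, 0 < q ->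
    is_series (fun j : nat => (-1) ^ (j + 1) * (1 / INR (j + 1) - 1 / (INR (j + 1) + q)))
              (psit q + 1 / q - gamma0t)
    /\ ex_finite_lim_seq (gprod q)
    /\ 0 < Gammat q
    /\ is_derive (fun x : R => ln (Gammat x)) q (psit q).
Proof.
  intros q Hq. split; [apply part1; auto|]. split.
  { exists (exp (Gs q)). apply gprod_lim; auto. }
  split. { apply Gammat_pos; auto. }
  apply (is_derive_ext_loc (fun x => - ln x + gamma0t * x + Gs x)).
  { exists (mkposreal q Hq). intros y Hy. change (Rabs (y - q) < q) in Hy.
    apply Rabs_def2 in Hy. symmetry. apply ln_Gammat. lra. }
  assert (HG : is_derive Gs q (Series (dt q))) by (apply is_derive_Reals, Gs_derive; auto).
  assert (Hs : Series (dt q) = psit q + 1 / q - gamma0t) by (apply is_series_unique, part1; auto).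
  rewrite Hs in HG.
  assert (H1 : is_derive (fun x => - ln x + gamma0t * x) q (- / q + gamma0t)).
  { auto_derive. exact Hq. field. lra. }
  pose proof (is_derive_plus _ _ _ _ _ H1 HG) as H2.
  replace (psit q) with (plus (- / q + gamma0t) (psit q + 1 / q - gamma0t)).
  exact H2. unfold plus; simpl. field. lra.
Qed.
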